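(* Let $\mathcal D$ be a continuous distribution on $\mathbb{R}$ with density $f$ and CDF $F$ whose support is unbounded in the direction of $+\infty$, with hazard rate $h_{\mathcal D}(x)=\frac{f(x)}{1-F(x)}$, and let $\tilde\Phi(G)=\mathbb{E}_{Z_1,\dots,Z_N\overset{iid}{\sim}\mathcal D}\max_i\{G_i+Z_i\}$. Then in each round $t$ of GBPA$(\tilde\Phi)$ with loss vector $g_t\in[-1,0]^N$, the divergence penalty satisfies \[\mathbb{E}_{i_t}\big[D_{\tilde\Phi}(\hat G_t,\hat G_{t-1})\,\big|\,\hat G_{t-1}\big]\le N\,\sup_x h_{\mathcal D}(x).\]
   Context: Algorithm GBPA$(\tilde\Phi)$: set $\hat G_0=0$; for $t=1,\dots,T$: sample arm $i_t$ according to $p_t=\nabla\tilde\Phi(\hat G_{t-1})$ (the $i$-th entry is the probability that $i=\arg\max_j\{G_j+Z_j\}$ at $G=\hat G_{t-1}$); incur and observe only $g_{t,i_t}$; set $\hat G_t=\hat G_{t-1}+\frac{g_{t,i_t}}{p_{t,i_t}}e_{i_t}$, where $e_i$ is the $i$-th standard basis vector. $D_{\tilde\Phi}(x,y)=\tilde\Phi(x)-\tilde\Phi(y)-\langle\nabla\tilde\Phi(y),x-y\rangle$ is the Bregman divergence. *)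

(* Defs.v *)
From HB Require Import structures.
From mathcomp Require Import all_boot all_order all_algebra.
From mathcomp Require Import all_classical all_reals all_analysis.
Set Implicit Arguments. Unset Strict Implicit. Unset Printing Implicit Defensive.
Import Order.TTheory GRing.Theory Num.Theory.
Import numFieldNormedType.Exports.
Local Open Scope classical_set_scope.
Local Open Scope ring_scope.

Section GBPA.
Context {R : realType} {d : measure_display} {T : measurableType d}.

(* Mutual independence of the finite family Z_0,...,Z_{N-1}: product rule for
   every family of Borel sets (taking B i = setT gives every subfamily). *)
Definition mutually_independent (P : probability T R) (N : nat)
  (Z : 'I_N -> T -> R) : Prop :=
  forall B : 'I_N -> set R, (forall i, measurable (B i)) ->
    P (\bigcap_(i in [set: 'I_N]) (Z i @^-1` B i)) =
    (\prod_(i < N) P (Z i @^-1` B i))%E.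

Definition has_density (P : probability T R) (X : T -> R) (f : R -> R) : Prop :=
  forall A : set R, measurable A ->
    P (X @^-1` A) = (\int[lebesgue_measure]_(x in A) (f x)%:E)%E.

Definition cdf (f : R -> R) (x : R) : R :=
  Rintegral lebesgue_measure `]-oo, x] f.
Definition hazard (f : R -> R) (x : R) : R := f x / (1 - cdf f x).

Definition maxGZ (N : nat) (Z : 'I_N -> T -> R) (G : 'I_N -> R) (w : T) : \bar R :=
  \big[maxe/-oo%E]_(i < N) ((G i + Z i w)%:E).

Definition Phi (P : probability T R) (N : nat) (Z : 'I_N -> T -> R)
  (G : 'I_N -> R) : R :=
  fine (\int[P]_w maxGZ Z G w)%E.

(* grad Phi~(G)_i = probability that i = argmax_j {G_j + Z_j} *)
Definition gradPhi (P : probability T R) (N : nat) (Z : 'I_N -> T -> R)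
  (G : 'I_N -> R) (i : 'I_N) : R :=
  fine (P [set w | forall j, G j + Z j w <= G i + Z i w]).

Definition bregman (P : probability T R) (N : nat) (Z : 'I_N -> T -> R)
  (x y : 'I_N -> R) : R :=
  Phi P Z x - Phi P Z y - \sum_(j < N) gradPhi P Z y j * (x j - y j).

Definition gbpa_update (N : nat) (G g p : 'I_N -> R) (i : 'I_N) : 'I_N -> R :=
  fun j => G j + (if j == i then g i / p i else 0).

End GBPA.

(* Main.v *)
Require Import Defs.
From HB Require Import structures.
From mathcomp Require Import all_boot all_order all_algebra.
From mathcomp Require Import all_classical all_reals all_analysis.
From mathcomp Require Import measurable_realfun.
From mathcomp Require Import lra ring.
Import Order.TTheory GRing.Theory Num.Theory.
Import numFieldNormedType.Exports.
Local Open Scope classical_set_scope.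
Local Open Scope ring_scope.

Set Implicit Arguments. Unset Strict Implicit. Unset Printing Implicit Defensive.


Section PartA.
Context {R : realType}.
Variable f : R -> R.
Hypotheses (f_meas : measurable_fun setT f) (f_ge0 : forall x, 0 <= f x)
  (f_tot : (\int[lebesgue_measure]_(y in setT) (f y)%:E = 1)%E)
  (unb : forall M : R, (0 < \int[lebesgue_measure]_(y in `]M, +oo[) (f y)%:E)%E).

Definition If (A : set R) := (\int[lebesgue_measure]_(y in A) (f y)%:E)%E.

Lemma fEm (D : set R) : measurable_fun D (EFin \o f).
Proof.
have mf := (measurable_realfun.measurable_EFinP _ _).2 f_meas.
exact: (measurable_funS _ _ mf).
Qed.

Lemma If_ge0 A : measurable A -> (0 <= If A)%E.
Proof. by move=> mA; apply: integral_ge0 => x _; rewrite lee_fin. Qed.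

Lemma If_le1 A : measurable A -> (If A <= 1)%E.
Proof.
move=> mA; rewrite -f_tot; apply: ge0_subset_integral => //.
- exact: fEm.
- by move=> x _; rewrite lee_fin.
Qed.

Lemma If_fin A : measurable A -> If A \is a fin_num.
Proof.
move=> mA; rewrite ge0_fin_numE ?If_ge0//.
by apply: (le_lt_trans (If_le1 mA)); rewrite ltry.
Qed.

Lemma If_split x : (If `]-oo, x] + If `]x, +oo[ = 1)%E.
Proof.
rewrite -f_tot /If -ge0_integral_setU//.
all: try (by move=> y _; rewrite lee_fin).
- by rewrite -setCitvl setUv.
- exact: fEm.
- by rewrite -setCitvl; apply/disj_setPCl.
Qed.

Lemma oneFE x : ((1 - Defs.cdf f x)%:E = If `]x, +oo[)%E.
Proof.
rewrite /Defs.cdf /Rintegral EFinB fineK; last exact: If_fin.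
have := If_split x; rewrite /If => <-.
rewrite addeAC subee ?add0e//; exact: If_fin.
Qed.

Lemma oneF_gt0 x : 0 < 1 - Defs.cdf f x.
Proof. by rewrite -lte_fin oneFE; apply: unb. Qed.

Section hr.
Variable hr : R.
Hypothesis hrE : ereal_sup (range (fun x => (hazard f x)%:E)) = hr%:E.

Lemma hazard_le x : hazard f x <= hr.
Proof.
by rewrite -lee_fin -hrE; apply: ereal_sup_ubound; exists x.
Qed.

Lemma hr_ge0 : 0 <= hr.
Proof.
apply: le_trans (hazard_le 0); rewrite /hazard divr_ge0//.
exact/ltW/oneF_gt0.
Qed.

Lemma f_le x : f x <= hr * (1 - Defs.cdf f x).
Proof.
have h0 := oneF_gt0 x.
have -> : f x = hazard f x * (1 - Defs.cdf f x).
  by rewrite /hazard divfK// gt_eqF.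
by rewrite ler_pM2r// hazard_le.
Qed.

Lemma slice_bound (c u : R) : 0 <= u ->
  (If `[c, (c + u)%R[ <= (hr * u)%:E * If `[c, +oo[)%E.
Proof.
move=> u0.
pose K := (hr%:E * If `[c, +oo[)%E.
apply: (@le_trans _ _ (\int[lebesgue_measure]_(y in `[c, (c + u)%R[) (cst K y))%E).
  apply: ge0_le_integral => //.
  - by move=> y _; rewrite lee_fin.
  - exact: fEm.
  - move=> z /=; rewrite in_itv /= => /andP[cz _]; rewrite (le_trans (y := (hr * (1 - Defs.cdf f z))%:E))//.
      by rewrite lee_fin f_le.
    rewrite EFinM oneFE /K lee_wpmul2l ?lee_fin ?hr_ge0//.
    apply: ge0_subset_integral => //.
    + exact: fEm.
    + by move=> y _; rewrite lee_fin.
    + move=> y /=; rewrite !in_itv /= andbT => zy.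
      by rewrite (le_trans cz)// ltW.
rewrite integral_cst//.
have h : (lebesgue_measure `[c, (c + u)%R[%classic = u%:E)%E.
  rewrite lebesgue_measure_itv /= lte_fin ltrDl.
  case: ltP => [_|u0']; first by rewrite -EFinB addrAC subrr add0r.
  by have -> : u = 0 by apply/eqP; rewrite eq_le u0 u0'.
apply: (@le_trans _ _ (K * u%:E)%E).
  by rewrite le_eqVlt; apply/orP; left; apply/eqP; congr (K * _)%E; exact: h.
by rewrite /K EFinM muleAC.
Qed.

End hr.
End PartA.


Lemma mG_R (R : realType) :
  (measurable : set (set R)) = <<s @measurable_realfun.RGenInftyO.G R >>.
Proof. have H := @measurable_realfun.RGenInftyO.measurableE R. exact: H. Qed.

Section PartB.
Context {R : realType} {d : measure_display} {T : measurableType d}.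
Variables (P : probability T R) (N : nat) (Z : 'I_N -> T -> R).
Hypotheses (Zmeas : forall i, measurable_fun setT (Z i))
  (Zindep : mutually_independent P Z).
Variables (G : 'I_N -> R) (i j0 : 'I_N).
Hypothesis j0i : j0 != i.

Definition Mx (w : T) : R :=
  \big[Num.max/(G j0 + Z j0 w)]_(j | j != i) (G j + Z j w).

Lemma Mx_le w m : Mx w <= m <-> (forall j, j != i -> G j + Z j w <= m).
Proof.
split; first by move/bigmax_leP => [_ h].
by move=> h; apply/bigmax_leP; split; [exact: h j0 j0i|exact: h].
Qed.

Lemma Mx_lt w m : Mx w < m <-> (forall j, j != i -> G j + Z j w < m).
Proof.
split; first by move/bigmax_ltP => [_ h].
by move=> h; apply/bigmax_ltP; split; [exact: h j0 j0i|exact: h].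
Qed.

Lemma mGZ j : measurable_fun setT (fun w => G j + Z j w).
Proof. by apply: measurable_funD => //; exact: Zmeas. Qed.

Lemma mMx : measurable_fun setT Mx.
Proof.
rewrite /Mx.
suff : forall r : seq 'I_N, measurable_fun setT
  (fun w => \big[Num.max/(G j0 + Z j0 w)]_(j <- r | j != i) (G j + Z j w)).
  by move/(_ (index_enum _)).
elim=> [|a r IH].
  by under eq_fun do rewrite big_nil; exact: mGZ.
under eq_fun do rewrite big_cons.
case: (a != i) => //.
exact: measurable_maxr (mGZ a) IH.
Qed.

Definition Zi := Z i.
HB.instance Definition _ := isMeasurableFun.Build _ _ _ _ Zi (Zmeas i).
HB.instance Definition _ := isMeasurableFun.Build _ _ _ _ Mx mMx.
Definition pr (w : T) : (R * R)%type := (Mx w, Zi w).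
Lemma mpr : measurable_fun setT pr.
Proof. exact: measurable_fun_pair mMx (Zmeas i). Qed.
HB.instance Definition _ := isMeasurableFun.Build _ _ _ _ pr mpr.

Local Open Scope ereal_scope.

Lemma indep_half (m : R) (B : set R) : measurable B ->
  P (Mx @^-1` `]-oo, m[ `&` Zi @^-1` B) =
  P (Mx @^-1` `]-oo, m[) * P (Zi @^-1` B).
Proof.
have key : forall B, measurable B ->
    P (Mx @^-1` `]-oo, m[ `&` Zi @^-1` B) =
    P (Zi @^-1` B) * \prod_(j < N | j != i) P (Z j @^-1` `]-oo, (m - G j)%R[%classic).
  move=> B0 mB0.
  pose Bf j := if j == i then B0 else `]-oo, (m - G j)%R[%classic.
  have mBf : forall j, measurable (Bf j).
    by move=> j; rewrite /Bf; case: ifP.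
  have := Zindep mBf.
  rewrite (bigD1 i) //= /Bf eqxx.
  have -> : \bigcap_(j in [set: 'I_N]) Z j @^-1` Bf j =
      Mx @^-1` `]-oo, m[ `&` Zi @^-1` B0.
    rewrite predeqE => w; split.
      move=> h; split.
        rewrite /= in_itv /=; apply/Mx_lt => j ji.
        have := h j I; rewrite /Bf (negbTE ji) /= in_itv /=.
        by rewrite ltrBrDl.
      by have := h i I; rewrite /Bf eqxx.
    move=> [/=]; rewrite in_itv /= => /Mx_lt h hB j _.
    rewrite /Bf; case: ifPn => [/eqP -> //|ji].
    by rewrite /= in_itv /= ltrBrDl h.
  move=> ->; congr (_ * _); apply: eq_bigr => j ji.
  by rewrite /Bf (negbTE ji).
move=> mB; rewrite key //.
have := key setT measurableT.
rewrite preimage_setT setIT probability_setT mul1e => ->.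
by rewrite muleC.
Qed.


Lemma fin_P (A : set T) : measurable A -> P A \is a fin_num.
Proof.
move=> mA; rewrite ge0_fin_numE//.
by apply: (le_lt_trans (probability_le1 _ mA)); rewrite ltry.
Qed.

Lemma mZi_pre (B : set R) : measurable B -> measurable (Zi @^-1` B).
Proof. by move=> mB; rewrite -[X in measurable X]setTI; exact: (Zmeas i). Qed.

Lemma mMx_pre (B : set R) : measurable B -> measurable (Mx @^-1` B).
Proof. by move=> mB; rewrite -[X in measurable X]setTI; exact: mMx. Qed.

Section indepB.
Variables (B : set R) (mB : measurable B).
Definition mu1 (A : set R) := P (Mx @^-1` A `&` Zi @^-1` B).
Let mu1_0 : mu1 set0 = 0.
Proof. by rewrite /mu1 preimage_set0 set0I measure0. Qed.
Let mu1_ge0 A : 0 <= mu1 A.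
Proof. exact: measure_ge0. Qed.
Let mu1_sa : semi_sigma_additive mu1.
Proof.
move=> F mF tF mUF; rewrite /mu1 preimage_bigcup setI_bigcupl.
apply: measure_semi_sigma_additive.
- by move=> n; apply: measurableI; [exact: mMx_pre|exact: mZi_pre].
- apply/trivIsetP => a b _ _ ab; rewrite setIACA -preimage_setI.
  by move/trivIsetP: tF => /(_ _ _ I I ab) ->; rewrite preimage_set0 set0I.
- rewrite -setI_bigcupl -preimage_bigcup.
  by apply: measurableI; [exact: mMx_pre|exact: mZi_pre].
Qed.
HB.instance Definition _ := isMeasure.Build _ _ _ mu1 mu1_0 mu1_ge0 mu1_sa.

Definition rB : {nonneg R} := NngNum (fine_ge0 (measure_ge0 P (Zi @^-1` B))).
Definition mu2 := mscale rB (distribution P Mx).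

Lemma mu2E A : mu2 A = P (Mx @^-1` A) * P (Zi @^-1` B).
Proof.
rewrite [RHS]muleC; apply: eq_trans (_ : (fine (P (Zi @^-1` B)))%:E * P (Mx @^-1` A) = _).
  by [].
by rewrite fineK //; exact/fin_P/mZi_pre.
Qed.

Lemma indep (A : set R) : measurable A ->
  P (Mx @^-1` A `&` Zi @^-1` B) = P (Mx @^-1` A) * P (Zi @^-1` B).
Proof.
move=> mA.
have h : mu1 A = mu2 A.
  apply: (@measure_unique _ _ _ (@measurable_realfun.RGenInftyO.G R)
    (fun n => `]-oo, n%:R[%classic) (mG_R R)) => //.

  - move=> _ _ [x ->] [y ->]; exists (Num.min x y).
    by rewrite predeqE => z /=; rewrite !in_itv /= lt_min; split => [[-> ->]|/andP].
  - by move=> n; exists n%:R.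
  - rewrite predeqE => z; split => // _; exists (Num.trunc `|z|).+1 => //=.
    by rewrite in_itv /= (le_lt_trans (ler_norm z) (truncnS_gt _)).
  - move=> _ [x ->]; rewrite /mu1; apply: eq_trans (indep_half x mB) _; rewrite /mu2 /mscale /=.
    by rewrite [RHS]mu2E.
  - move=> k; apply: (le_lt_trans (probability_le1 _ _)); last by rewrite ltry.
    by apply: measurableI; [exact: mMx_pre|exact: mZi_pre].
by move: h; rewrite /mu1 mu2E.
Qed.
End indepB.

Lemma pr_law (S : set (R * R)) : measurable S ->
  P (pr @^-1` S) = (distribution P Mx \x distribution P Zi) S.
Proof.
move=> mS; rewrite (product_measure_unique (m' := distribution P pr)) //.
move=> A B mA mB.
apply: eq_trans (_ : P (Mx @^-1` A `&` Zi @^-1` B) = _); first by [].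
exact: indep.
Qed.

Section key.
Variable f : R -> R.
Hypotheses (f_meas : measurable_fun setT f) (f_ge0 : forall x, (0 <= f x)%R)
  (f_tot : (\int[lebesgue_measure]_(y in setT) (f y)%:E = 1)%E)
  (unb : forall M : R, (0 < \int[lebesgue_measure]_(y in `]M, +oo[) (f y)%:E)%E)
  (Zdens : has_density P (Z i) f).
Variable hr : R.
Hypothesis hrE : ereal_sup (range (fun x => (hazard f x)%:E)) = hr%:E.
Variable u : R.
Hypothesis u0 : (0 <= u)%R.

Definition E2 := [set w | forall j, (G j + Z j w <= G i + Z i w)%R].
Definition E1 := [set w | E2 w /\ exists j, j != i /\ (G i + Z i w - u < G j + Z j w)%R].
Definition S2 := [set p : R * R | (p.1 <= G i + p.2)%R].
Definition S1 := [set p : R * R | (p.1 <= G i + p.2)%R /\ (G i + p.2 - u < p.1)%R].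

Lemma E2E : E2 = pr @^-1` S2.
Proof.
rewrite predeqE => w; rewrite /E2 /S2 /pr /Zi /=; split.
  by move=> h; apply/Mx_le => j _; exact: h.
move/Mx_le => h j; have [->//|ji] := eqVneq j i; exact: h.
Qed.

Lemma E1E : E1 = pr @^-1` S1.
Proof.
rewrite predeqE => w; rewrite /E1 /S1 /pr /Zi /= -/(E2 w).
have -> : E2 w = (Mx w <= G i + Z i w)%R.
  by rewrite E2E.
split => -[h1 h2]; split => //.
  rewrite ltNge; apply/negP => /Mx_le h.
  by case: h2 => j [ji]; rewrite ltNge h.
apply/not_existsP => h; move: h2; apply/negP; rewrite -leNgt; apply/Mx_le => j ji.
rewrite leNgt; apply/negP => hj; apply: (h j); exact: conj.
Qed.

Lemma mS2 : measurable S2.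
Proof.
have := @measurable_fun_ler _ _ _ setT fst (fun p : R * R => G i + p.2)%R
  measurable_fst (measurable_funD (measurable_cst _) measurable_snd)
  measurableT [set true] I.
by rewrite setTI.
Qed.

Lemma mS1 : measurable S1.
Proof.
have := @measurable_fun_ltr _ _ _ setT (fun p : R * R => G i + p.2 - u)%R fst
  (measurable_funB (measurable_funD (measurable_cst _) measurable_snd) (measurable_cst _))
  measurable_fst measurableT [set true] I.
rewrite setTI => h.
have -> : S1 = S2 `&` ((fun p : R * R => (G i + p.2 - u < p.1)%R) @^-1` [set true]).
  by [].
exact: measurableI mS2 h.
Qed.

Lemma xsec2 m : xsection S2 m = `[(m - G i)%R, +oo[%classic.
Proof.
rewrite /xsection predeqE => z /=; rewrite in_itv /= andbT inE /S2 /=.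
by rewrite lerBlDl.
Qed.

Lemma xsec1 m : xsection S1 m = `[(m - G i)%R, (m - G i + u)%R[%classic.
Proof.
rewrite /xsection predeqE => z /=; rewrite in_itv /= inE /S1 /=.
rewrite lerBlDl; split => [[h1 h2]|/andP[h1 h2]].
  by apply/andP; split => //; lra.
by split => //; lra.
Qed.

Lemma lawZ A : measurable A -> distribution P Zi A = If f A.
Proof. by move=> mA; apply: eq_trans (Zdens mA). Qed.

Lemma keybound : P E1 <= (hr * u)%:E * P E2.
Proof.
rewrite E1E E2E !pr_law; [|exact: mS2|exact: mS1].
have hu : (0 <= (hr * u)%:E)%E.
  by rewrite lee_fin mulr_ge0 // (hr_ge0 f_meas f_ge0 f_tot unb hrE).
have m2 := measurable_fun_xsection (distribution P Zi) mS2.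
have m1 := measurable_fun_xsection (distribution P Zi) mS1.
rewrite /product_measure1 -ge0_integralZl //.
apply: ge0_le_integral => //.
all: try exact: m1.
all: try exact: (measurable_funeM _ m2).
all: try (by move=> x _; exact: measure_ge0).
move=> m _ /=; rewrite xsec1 xsec2 !lawZ //.
exact: (slice_bound f_meas f_ge0 f_tot unb hrE).
Qed.
End key.
End PartB.


Section PartC.
Context {R : realType} {d : measure_display} {T : measurableType d}.
Variables (P : probability T R) (N : nat) (Z : 'I_N -> T -> R).
Hypotheses (Zmeas : forall i, measurable_fun setT (Z i))
  (Zindep : mutually_independent P Z).
Variables (G : 'I_N -> R) (i : 'I_N) (u : R).
Hypothesis u0 : 0 <= u.

Lemma mE2 : measurable (E2 Z G i).
Proof.
have [[j0 j0i]|no] := pselect (exists j0, j0 != i).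
  rewrite (E2E Z G j0i) -[X in measurable X]setTI.
  exact: (mpr Zmeas G i j0) (mS2 G i).
have -> : E2 Z G i = setT; last exact: measurableT.
rewrite predeqE => w; split => // _ j.
have [->//|ji] := eqVneq j i.
by exfalso; apply: no; exists j.
Qed.

Lemma mE1 : measurable (E1 Z G i u).
Proof.
have [[j0 j0i]|no] := pselect (exists j0, j0 != i).
  rewrite (E1E Z G j0i) -[X in measurable X]setTI.
  exact: (mpr Zmeas G i j0) (mS1 G i u).
have -> : E1 Z G i u = set0; last exact: measurable0.
rewrite predeqE => w; split => // -[_ [j [ji _]]].
by apply: no; exists j.
Qed.

Local Open Scope ereal_scope.

Lemma keyb (f : R -> R) (f_meas : measurable_fun setT f)
  (f_ge0 : forall x, (0 <= f x)%R)
  (f_tot : (\int[lebesgue_measure]_(y in setT) (f y)%:E = 1)%E)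
  (unb : forall M : R, (0 < \int[lebesgue_measure]_(y in `]M, +oo[) (f y)%:E)%E)
  (Zdens : has_density P (Z i) f) (hr : R)
  (hrE : ereal_sup (range (fun x => (hazard f x)%:E)) = hr%:E) :
  P (E1 Z G i u) <= (hr * u)%:E * P (E2 Z G i).
Proof.
have [[j0 j0i]|no] := pselect (exists j0, j0 != i).
  exact: (keybound Zmeas Zindep G j0i f_meas f_ge0 f_tot unb Zdens hrE u0).
have -> : E1 Z G i u = set0.
  rewrite predeqE => w; split => // -[_ [j [ji _]]].
  by apply: no; exists j.
rewrite measure0 mule_ge0 // ?lee_fin ?mulr_ge0 //.
exact: (hr_ge0 f_meas f_ge0 f_tot unb hrE).
Qed.


Variable c : R.
Hypothesis cu : c = (- u)%R.
Definition xup j := (G j + (if j == i then c else 0))%R.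

Lemma maxGZ_mono (x y : 'I_N -> R) w : (forall j, x j <= y j)%R ->
  maxGZ Z x w <= maxGZ Z y w.
Proof. by move=> h; apply: le_bigmax2 => j _; rewrite lee_fin lerD2r h. Qed.

Lemma xup_le j : (xup j <= G j)%R.
Proof. by rewrite /xup; case: ifP => _; rewrite ?addr0 // cu gerDl oppr_le0. Qed.

Lemma pw w : maxGZ Z xup w + (u * \1_(E2 Z G i) w)%:E <=
  maxGZ Z G w + (u * \1_(E1 Z G i u) w)%:E.
Proof.
rewrite !indicE.
have [w2|nw2] := boolP (w \in E2 Z G i); last first.
  have nw1 : w \in E1 Z G i u = false.
    apply/negP => /set_mem [h _]; move/negP: nw2; apply; exact: mem_set.
  by rewrite nw1 !mulr0 !adde0; exact: maxGZ_mono xup_le.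
have [w1|nw1] := boolP (w \in E1 Z G i u).
  by rewrite leeD2r //; exact: maxGZ_mono xup_le.
rewrite !mulr1 !mulr0 adde0.
have w2' := set_mem w2.
have hle : maxGZ Z xup w <= (G i + Z i w - u)%:E.
  apply: bigmax_le => [|j _]; first exact: leNye.
  rewrite lee_fin /xup.
  have [->|ji] := eqVneq j i.
    by rewrite ?eqxx cu; lra.
  rewrite addr0 leNgt; apply/negP => hj.
  move/negP: nw1; apply; apply: mem_set; split => //; exists j; split => //.
apply: le_trans (leeD2r _ hle) _.
rewrite -EFinD subrK.
exact: (le_bigmax _ (fun k => (G k + Z k w)%:E) i).
Qed.

Lemma fin_PC (A : set T) : measurable A -> P A \is a fin_num.
Proof.
move=> mA; rewrite ge0_fin_numE//.
by apply: (le_lt_trans (probability_le1 _ mA)); rewrite ltry.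
Qed.

Lemma Phi_diff (Phi_finite : forall G, P.-integrable setT (maxGZ Z G)) :
  (Phi P Z xup - Phi P Z G <=
    u * (fine (P (E1 Z G i u)) - fine (P (E2 Z G i))))%R.
Proof.
have fE (E : set T) : (fun w => (u * \1_E w)%:E) = (fun w => u%:E * (\1_E w)%:E).
  by apply/funext => w; rewrite EFinM.
have iE (E : set T) : measurable E -> P.-integrable setT (fun w => (u * \1_E w)%:E).
  by move=> mE; rewrite fE; apply: integrableZl => //; exact: integrable_indic.
have iI (E : set T) : measurable E -> \int[P]_w (u * \1_E w)%:E = u%:E * P E.
  move=> mE; rewrite fE integralZl //; last exact: integrable_indic.
  by rewrite integral_indic // setIT.
have H : \int[P]_w (maxGZ Z xup w + (u * \1_(E2 Z G i) w)%:E) <=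
         \int[P]_w (maxGZ Z G w + (u * \1_(E1 Z G i u) w)%:E).
  apply: le_integral => //.
  - exact: integrableD (Phi_finite _) (iE _ mE2).
  - exact: integrableD (Phi_finite _) (iE _ mE1).
  - by move=> w _; exact: pw.
rewrite (integralD measurableT (Phi_finite xup) (iE _ mE2)) in H.
rewrite (integralD measurableT (Phi_finite G) (iE _ mE1)) in H.
rewrite (iI _ mE1) (iI _ mE2) in H.
move: H; rewrite /Phi.
rewrite -(fineK (integrable_fin_num _ (Phi_finite xup))) //.
rewrite -(fineK (integrable_fin_num _ (Phi_finite G))) //.
rewrite -(fineK (fin_PC mE1)) -(fineK (fin_PC mE2)).
rewrite -!EFinM -!EFinD lee_fin !fineK //.
- by move=> H; rewrite mulrBr; lra.
- exact: fin_PC mE2.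
- exact: fin_PC mE1.
- exact: integrable_fin_num _ (Phi_finite G).
- exact: integrable_fin_num _ (Phi_finite xup).
Qed.

End PartC.

Unset Implicit Arguments. Set Strict Implicit. Set Printing Implicit Defensive.


Theorem lemma2 (R : realType) (d : measure_display) (T : measurableType d)
  (P : probability T R) (N : nat) (Z : 'I_N -> T -> R) (f : R -> R)
  (Zmeas : forall i, measurable_fun setT (Z i))
  (Zindep : mutually_independent P Z)
  (f_meas : measurable_fun setT f)
  (f_ge0 : forall x, 0 <= f x)
  (Zdens : forall i, has_density P (Z i) f)
  (unbounded_support : forall M : R,
      (0 < \int[lebesgue_measure]_(y in `]M, +oo[) (f y)%:E)%E)
  (Phi_finite : forall G : 'I_N -> R, P.-integrable setT (maxGZ Z G))
  (Ghat : 'I_N -> R) (g : 'I_N -> R)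
  (g_range : forall i, -1 <= g i <= 0) :
  let p := gradPhi P Z Ghat in
  ((\sum_(i < N) p i * bregman P Z (gbpa_update Ghat g p i) Ghat)%:E
    <= (N%:R)%:E * ereal_sup (range (fun x => (hazard f x)%:E)))%E.
Proof.
cbv zeta; set p := gradPhi P Z Ghat.
have [N0|Npos] := posnP N.
  rewrite big1 => [|j]; last by move: (ltn_ord j); rewrite {2}N0.
  by rewrite N0 mul0e.
pose i0 : 'I_N := Ordinal Npos.
have f_tot : (\int[lebesgue_measure]_(y in setT) (f y)%:E = 1)%E.
  by rewrite -(Zdens i0 _ measurableT) preimage_setT probability_setT.
case hS : (ereal_sup _) => [hr| |]; last first.
- exfalso; have := @ereal_sup_ubound _ (range (fun x => (hazard f x)%:E))
    (hazard f 0)%:E (ex_intro2 _ _ 0 I erefl).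
  by rewrite hS leeNy_eq.
- by rewrite gt0_muley ?lte_fin ?ltr0n // leey.
have hr0 := hr_ge0 f_meas f_ge0 f_tot unbounded_support hS.
apply: (@le_trans _ _ (\sum_(i < N) hr)%:E); last first.
  by rewrite sumr_const card_ord -EFinM mulr_natl.
rewrite lee_fin; apply: ler_sum => i _.
have pi0 : 0 <= p i by apply: fine_ge0; exact: measure_ge0.
have [->|pn] := eqVneq (p i) 0; first by rewrite mul0r.
have [gl gu] := andP (g_range i).
pose c := g i / p i.
pose u := - c.
have pipos : 0 < p i by rewrite lt0r pn pi0.
have u0 : 0 <= u by rewrite /u /c oppr_ge0 mulr_le0_ge0 // invr_ge0.
have cu : c = - u by rewrite /u opprK.
have hD := @Phi_diff _ _ _ P N Z Zmeas Ghat i u u0 c cu Phi_finite.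
have hK := keyb Zmeas Zindep Ghat u0 f_meas f_ge0 f_tot unbounded_support
  (Zdens i) hS.
have fin1 : P (E1 Z Ghat i u) \is a fin_num by apply: fin_PC; exact: mE1.
have fin2 : P (E2 Z Ghat i) \is a fin_num by apply: fin_PC; exact: mE2.
move: hK; rewrite -(fineK fin1) -(fineK fin2) -EFinM lee_fin => hK.
have ep : fine (P (E2 Z Ghat i)) = p i by [].
rewrite ep in hD hK.
have eb : bregman P Z (gbpa_update Ghat g p i) Ghat =
    Phi P Z (xup Ghat i c) - Phi P Z Ghat - p i * c.
  rewrite /bregman; congr (_ - _).
  rewrite (bigD1 i) //= big1 ?addr0 => [|j ji].
    by rewrite /gbpa_update eqxx addrAC subrr add0r.
  by rewrite /gbpa_update (negbTE ji) addr0 subrr mulr0.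
rewrite eb.
rewrite mulrBr in hD.
have h1 : Phi P Z (xup Ghat i c) - Phi P Z Ghat - p i * c <= u * fine (P (E1 Z Ghat i u)).
  have hc : p i * c = - (u * p i) by rewrite cu mulrN mulrC.
  by rewrite hc; lra.
have h3 := ler_wpM2l u0 hK.
have e : u * p i = - g i by rewrite /u /c mulNr divfK.
apply: le_trans (ler_wpM2l pi0 h1) _.
apply: le_trans (ler_wpM2l pi0 h3) _.
have -> : p i * (u * (hr * u * p i)) = hr * ((u * p i) * (u * p i)) by ring.
rewrite e mulrNN ler_piMr //. all: try exact: mulr_ge0_le0. nra.
Qed.
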